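(* Let $\alpha$ be any graph function on a strongly connected digraph $G$. For any fair infinite sequence of raising operations starting from $\alpha$, with raising vectors $r(1),r(2),\dots$, the limit $r^*=\lim_{t\to\infty}r(t)$ exists and depends only on $\alpha$, not on the sequence of raising operations.
   Context: $G$ is a strongly connected directed graph (self-loops allowed); a graph function assigns a real weight $\alpha_{uv}$ to each edge. For a graph function $\beta$, $\beta_v^{\text{in}}=\max_{u:(u,v)\in G}\beta_{uv}$, $\beta_v^{\text{out}}=\max_{w:(v,w)\in G}\beta_{vw}$, $\rho^R_v=\max\{0,\beta_v^{\text{out}}-\beta_v^{\text{in}}\}$. A raising operation at $v$: if $\rho^R_v>0$, add $\rho^R_v/2$ to each $\beta_{uv}$ ($u\ne v$) and subtract it from each $\beta_{vw}$ ($w\ne v$); otherwise do nothing. A sequence of operations is fair if every vertex occurs infinitely often. The raising vector $r(t)$ satisfies $r(0)=0$ and, if the $t$-th operation is at $v$, $r_v(t)=r_v(t-1)+\rho^R_v/2$ (computed before the operation), other coordinates unchanged. *)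

(* Defs.v *)
From HB Require Import structures.
From mathcomp Require Import all_boot all_order all_algebra.
From mathcomp Require Import all_classical all_reals all_analysis.
Set Implicit Arguments. Unset Strict Implicit. Unset Printing Implicit Defensive.
Import Order.TTheory GRing.Theory Num.Theory.
Local Open Scope ring_scope.

(* A digraph on the finite vertex type V is an edge relation E : rel V
   (self-loops allowed).  A graph function is beta : V -> V -> R; only its
   values on edges (E u v) are ever consulted. *)

Section Raising.
Variables (R : realType) (V : finType) (E : rel V).

Definition strongly_connected : Prop := forall u v : V, connect E u v.

(* maximum of a finite list of reals; 0 on the empty list (never used for
   a vertex that has in- or out-edges) *)
Definition seqmax (s : seq R) : R := \big[Num.max/head 0 s]_(x <- s) x.

Definition beta_in (beta : V -> V -> R) (v : V) : R :=
  seqmax [seq beta u v | u <- enum V & E u v].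

Definition beta_out (beta : V -> V -> R) (v : V) : R :=
  seqmax [seq beta v w | w <- enum V & E v w].

Definition rhoR (beta : V -> V -> R) (v : V) : R :=
  Num.max 0 (beta_out beta v - beta_in beta v).

Definition raise (v : V) (beta : V -> V -> R) : V -> V -> R :=
  fun x y =>
    if 0 < rhoR beta v then
      if (y == v) && (x != v) then beta x y + rhoR beta v / 2
      else if (x == v) && (y != v) then beta x y - rhoR beta v / 2
      else beta x y
    else beta x y.

(* state after the first t operations of the sequence s (s t is the
   (t+1)-th operation) *)
Fixpoint beta_seq (alpha : V -> V -> R) (s : nat -> V) (t : nat) : V -> V -> R :=
  match t with
  | 0 => alpha
  | t'.+1 => raise (s t') (beta_seq alpha s t')
  end.

Fixpoint raising_vec (alpha : V -> V -> R) (s : nat -> V) (t : nat) : V -> R :=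
  match t with
  | 0 => fun _ => 0
  | t'.+1 => fun x =>
      if x == s t' then raising_vec alpha s t' x + rhoR (beta_seq alpha s t') x / 2
      else raising_vec alpha s t' x
  end.

Definition fair (s : nat -> V) : Prop :=
  forall (v : V) (N : nat), exists2 t, (N <= t)%N & s t = v.

End Raising.

(* Main.v *)
Require Import Defs.
From HB Require Import structures.
From mathcomp Require Import all_boot all_order all_algebra.
From mathcomp Require Import all_classical all_reals all_analysis.
From mathcomp Require Import ring lra zify.
Import Order.TTheory GRing.Theory Num.Theory.
Import numFieldNormedType.Exports.
Local Open Scope classical_set_scope.
Local Open Scope ring_scope.

Section Aux.
Variable R : realType.

Lemma bigmax_foldr (i : R) (s : seq R) :
  \big[Num.max/i]_(x <- s) x = foldr Num.max i s.
Proof. by elim: s => [|a s IH]; rewrite ?big_nil ?big_cons ?IH. Qed.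

Lemma foldr_max_ub (i : R) s x : x \in i :: s -> x <= foldr Num.max i s.
Proof.
elim: s => [|a s IH] /=; first by rewrite inE => /eqP ->.
move=> Hx.
have [Hxa|Hxa] := eqVneq x a; first by rewrite Hxa le_max lexx.
rewrite le_max; apply/orP; right; apply: IH.
move: Hx; rewrite !inE (negbTE Hxa) /=; done.
Qed.

Lemma foldr_max_le (i : R) s c : i <= c -> (forall x, x \in s -> x <= c) ->
  foldr Num.max i s <= c.
Proof.
elim: s => [|a s IH] //= Hi Hs.
rewrite ge_max Hs ?mem_head //=; apply: IH => // x Hx; by apply: Hs; rewrite inE Hx orbT.
Qed.

Lemma seqmax_ub (s : seq R) x : x \in s -> x <= seqmax s.
Proof.
rewrite /seqmax bigmax_foldr => Hx; apply: foldr_max_ub; by rewrite inE Hx orbT.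
Qed.

Lemma seqmax_le (s : seq R) c : s != [::] -> (forall x, x \in s -> x <= c) ->
  seqmax s <= c.
Proof.
rewrite /seqmax bigmax_foldr; case: s => [|a s] // _ H.
by apply: foldr_max_le => //; apply: H; exact: mem_head.
Qed.

Lemma seqmax_mono (T : eqType) (s : seq T) (g h : T -> R) :
  (forall x, g x <= h x) -> seqmax (map g s) <= seqmax (map h s).
Proof.
move=> H; case: s => [|a s]; first by rewrite /seqmax !big_nil.
apply: seqmax_le => // _ /mapP [x Hx ->].
apply: (le_trans (H x)); apply: seqmax_ub; exact: map_f.
Qed.

Lemma seqmax_shift (T : eqType) (s : seq T) (g : T -> R) c : s != [::] ->
  seqmax (map (fun x => g x + c) s) = seqmax (map g s) + c.
Proof.
move=> Hs; apply/eqP; rewrite eq_le; apply/andP; split.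
- apply: seqmax_le; first by case: s Hs.
  move=> _ /mapP [x Hx ->]; rewrite lerD2r; apply: seqmax_ub; exact: map_f.
- rewrite -lerBrDr; apply: seqmax_le; first by case: s Hs.
  move=> _ /mapP [x Hx ->]; rewrite lerBrDr.
  apply: seqmax_ub; exact: (map_f (fun x => g x + c)).
Qed.

End Aux.

Section Main.
Variables (R : realType) (V : finType) (E : rel V) (alpha : V -> V -> R).

Definition B (r : V -> R) : V -> V -> R := fun x y => alpha x y + r y - r x.
Definition fixedp (p : V -> R) := forall v, rhoR E (B p) v = 0.

Lemma rho_ge0 (b : V -> V -> R) v : 0 <= rhoR E b v.
Proof. by rewrite /rhoR le_max lexx. Qed.

Lemma beta_seq_B (s : nat -> V) t : beta_seq E alpha s t = B (raising_vec E alpha s t).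
Proof.
elim: t => [|t IH].
  by apply: funext => x; apply: funext => y; rewrite /B /= subr0 addr0.
rewrite /= IH; set r := raising_vec E alpha s t; set v := s t.
apply: funext => x; apply: funext => y; rewrite /raise /B.
have := rho_ge0 (B r) v; rewrite le_eqVlt => /orP [/eqP H0|Hp].
  rewrite -H0 ltxx.
  by case: eqP => [->|]; case: eqP => [->|] //; rewrite -H0 mul0r addr0.
rewrite Hp.
case: (eqVneq y v) => [Hy|Hy]; case: (eqVneq x v) => [Hx|Hx] /=.
- by rewrite Hx Hy; ring.
- by rewrite Hy; ring.
- by rewrite Hx; ring.
- by [].
Qed.

Lemma out_mono (r q : V -> R) v : (forall x, r x <= q x) ->
  beta_out E (B r) v + r v <= beta_out E (B q) v + q v.
Proof.
move=> Hrq; rewrite /beta_out.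
case Hs: [seq w <- enum V | E v w] => [|a l].
  by rewrite /seqmax !big_nil !add0r.
have Hne : (a :: l) != [::] by [].
have Hf (p : V -> R) : [seq B p v w | w <- a :: l] =
    [seq (fun w => alpha v w + p w) w + (- p v) | w <- a :: l].
  by apply: eq_map => w; rewrite /B.
rewrite !Hf !seqmax_shift // !addrNK.
by apply: seqmax_mono => w; rewrite lerD2l.
Qed.

Lemma in_mono (r q : V -> R) v : (forall x, r x <= q x) ->
  beta_in E (B q) v - q v <= beta_in E (B r) v - r v.
Proof.
move=> Hrq; rewrite /beta_in.
case Hs: [seq u <- enum V | E u v] => [|a l].
  by rewrite /seqmax !big_nil !add0r lerN2.
have Hne : (a :: l) != [::] by [].
have Hf (p : V -> R) : [seq B p u v | u <- a :: l] =
    [seq (fun u => alpha u v - p u) u + p v | u <- a :: l].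
  by apply: eq_map => u; rewrite /B addrAC.
rewrite !Hf !seqmax_shift // !addrK.
by apply: seqmax_mono => u; rewrite lerD2l lerN2.
Qed.

Lemma step_mono (r q : V -> R) v : (forall x, r x <= q x) ->
  r v + rhoR E (B r) v / 2 <= q v + rhoR E (B q) v / 2.
Proof.
move=> Hrq; have Ho := @out_mono r q v Hrq; have Hi := @in_mono r q v Hrq.
have Hq1 : 0 <= rhoR E (B q) v := rho_ge0 _ _.
have Hq2 : beta_out E (B q) v - beta_in E (B q) v <= rhoR E (B q) v.
  by rewrite /rhoR le_max lexx orbT.
have Hrv := Hrq v.
have : rhoR E (B r) v <= 2 * (q v - r v) + rhoR E (B q) v.
  rewrite /rhoR ge_max; apply/andP; split; rewrite -/(rhoR E (B q) v); lra.
lra.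
Qed.

Lemma B_shift (p : V -> R) c : B (fun x => p x + c) = B p.
Proof. by apply: funext => x; apply: funext => y; rewrite /B; ring. Qed.

End Main.

Section Dyn.
Variables (R : realType) (V : finType) (E : rel V) (alpha : V -> V -> R).
Local Notation rv s t := (raising_vec E alpha s t).
Local Notation B := (@B R V alpha).
Local Notation fixedp := (@fixedp R V E alpha).

Lemma rv_step (s : nat -> V) t x : rv s t.+1 x =
  if x == s t then rv s t x + rhoR E (B (rv s t)) x / 2 else rv s t x.
Proof. by rewrite /= beta_seq_B. Qed.

Lemma rv_incr (s : nat -> V) t x : rv s t x <= rv s t.+1 x.
Proof.
rewrite rv_step; case: eqP => // _.
by rewrite lerDl divr_ge0 // rho_ge0.
Qed.

Lemma rv_nd (s : nat -> V) x : {homo (fun t => rv s t x) : n m / (n <= m)%N >-> n <= m}.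
Proof.
move=> n m /subnK <-; elim: (m - n)%N => [|k IH]; first by rewrite add0n.
by apply: (le_trans IH); rewrite addSn rv_incr.
Qed.

Lemma rv_bound (s : nat -> V) (q : V -> R) : fixedp q -> (forall x, 0 <= q x) ->
  forall t x, rv s t x <= q x.
Proof.
move=> Hq Hq0; elim=> [|t IH] x; first exact: Hq0.
rewrite rv_step; case: eqP => // ->.
have := @step_mono R V E alpha _ _ (s t) IH; by rewrite Hq mul0r addr0.
Qed.

Lemma rv_ge0 (s : nat -> V) t x : 0 <= rv s t x.
Proof. by have := @rv_nd s x 0%N t (leq0n t). Qed.

Lemma limit_exists (s : nat -> V) : fair s ->
  (exists q, fixedp q /\ forall x, 0 <= q x) ->
  exists L : V -> R, (forall v, (fun t => rv s t v) @ \oo --> L v) /\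
     fixedp L /\ (forall x, 0 <= L x) /\
     (forall q, fixedp q -> (forall x, 0 <= q x) -> forall x, L x <= q x).
Proof.
move=> Hfair [q0 [Hq0 Hq00]].
have Hub v : has_ubound (range (fun t => rv s t v)).
  by exists (q0 v) => _ [t _ <-]; apply: rv_bound.
have Hne v : range (fun t => rv s t v) !=set0 by exists (rv s 0 v), 0%N.
pose L v := sup (range (fun t => rv s t v)).
have Hcvg v : (fun t => rv s t v) @ \oo --> L v.
  exact: nondecreasing_cvgn (rv_nd s v) (Hub v).
have HleL t v : rv s t v <= L v.
  by apply: sup_ubound; [exact: Hub | exists t].
have Hmin q : fixedp q -> (forall x, 0 <= q x) -> forall x, L x <= q x.
  move=> Hq Hqq x; apply: ge_sup; first exact: Hne.
  by move=> _ [t _ <-]; apply: rv_bound.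
exists L; split; first exact: Hcvg.
split; last split; last exact: Hmin.
- move=> v; apply/eqP; rewrite eq_le rho_ge0 andbT; apply/negP => /negP.
  rewrite -ltNge => Hrho.
  set e := rhoR E (B L) v / 4.
  have He : 0 < e by rewrite /e divr_gt0.
  have Hnear : \forall t \near \oo, forall w, `|L w - rv s t w| < e.
    apply: filter_forall => w; by move/cvgrPdist_lt: (Hcvg w) => /(_ e He).
  have [N _ HN] := Hnear.
  have [t Ht Hst] := Hfair v N.
  have Hw w : L w <= rv s t w + e.
    have := HN t Ht w; rewrite ltr_norml => /andP [_]; lra.
  have := @step_mono R V E alpha _ _ v Hw.
  rewrite B_shift.
  have Hs : rv s t.+1 v = rv s t v + rhoR E (B (rv s t)) v / 2.
    by rewrite rv_step Hst eqxx.
  have := HleL t.+1 v; rewrite /e; lra.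
- by move=> x; apply: (le_trans (rv_ge0 s 0 x)).
Qed.

End Dyn.
Set Implicit Arguments. Unset Strict Implicit.

Section Walks.
Variables (R : realType) (V : finType) (E : rel V) (alpha : V -> V -> R).

Fixpoint wt (x : V) (p : seq V) : R :=
  if p is y :: p' then alpha x y + wt y p' else 0.

Lemma wt_cat x p1 p2 : wt x (p1 ++ p2) = wt x p1 + wt (last x p1) p2.
Proof. by elim: p1 x => [|y p IH] x /=; rewrite ?add0r // IH addrA. Qed.

Lemma walk_split (p : seq V) (x : V) : ~~ uniq (x :: p) -> exists p1 p2 p3,
  [/\ p = p1 ++ p2 ++ p3, (0 < size p2)%N, (size p2 <= size p)%N &
      last (last x p1) p2 = last x p1].
Proof.
elim: p x => [|y p IH] x; first by [].
rewrite [uniq _]/= negb_and negbK => /orP [Hx|Hu].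
- case/splitPr: Hx => l1 l2.
  exists [::], (rcons l1 x), l2; split => //=.
  + by rewrite cat_rcons.
  + by rewrite size_rcons.
  + by rewrite size_rcons size_cat /= addnS ltnS leq_addr.
  + by rewrite last_rcons.
- have [p1 [p2 [p3 [Hp Hs Hsz Hl]]]] := IH y Hu.
  exists (y :: p1), p2, p3; split => //=.
  + by rewrite Hp.
  + exact: leqW.
Qed.

Fixpoint seqs (k : nat) : seq (seq V) :=
  if k is k'.+1 then [::] :: [seq x :: p | x <- enum V, p <- seqs k']
  else [:: [::]].

Lemma mem_seqs k (p : seq V) : (p \in seqs k) = (size p <= k)%N.
Proof.
elim: k p => [|k IH] [|x p] //=.
rewrite inE /= ltnS -IH; apply/allpairsP/idP.
- case=> [[y q] /= [_ Hq [_ ->]]]. done.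
- by move=> Hp; exists (x, p); rewrite mem_enum.
Qed.

Lemma argmax (T : eqType) (s : seq T) (f : T -> R) : s != [::] ->
  exists2 x, x \in s & forall y, y \in s -> f y <= f x.
Proof.
elim: s => [|a s IH] // _.
case: s IH => [|b s] IH.
  by exists a; rewrite ?mem_head // => y; rewrite inE => /eqP ->.
have [x Hx Hmax] := IH isT.
case: (leP (f a) (f x)) => Hax.
- exists x; first by rewrite inE Hx orbT.
  by move=> y; rewrite inE => /orP [/eqP ->|/Hmax].
- exists a; first exact: mem_head.
  move=> y; rewrite inE => /orP [/eqP ->|/Hmax Hy] //.
  exact: (le_trans Hy (ltW Hax)).
Qed.

End Walks.
Set Implicit Arguments. Unset Strict Implicit.

Section Crit.
Variables (R : realType) (V : finType) (E : rel V) (alpha : V -> V -> R).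
Variables (lam : R) (c : V) (C : seq V).
Hypothesis Hlam : forall x p, (0 < size p)%N -> (size p <= #|V|)%N ->
  path E x p -> last x p = x -> wt alpha x p <= lam * (size p)%:R.
Hypotheses (HCp : path E c C) (HCl : last c C = c) (HCs0 : (0 < size C)%N)
  (HCsn : (size C <= #|V|)%N) (HCw : wt alpha c C = lam * (size C)%:R).
Hypothesis hSC : strongly_connected E.

Definition aw x p := wt alpha x p - lam * (size p)%:R.

Lemma aw_cat x p1 p2 : aw x (p1 ++ p2) = aw x p1 + aw (last x p1) p2.
Proof. rewrite /aw wt_cat size_cat natrD; ring. Qed.

Lemma aw_rcons x p v : aw x (rcons p v) = aw x p + alpha (last x p) v - lam.
Proof. rewrite -cats1 aw_cat /aw /=; ring. Qed.

Lemma shorten_walk x p : (#|V| <= size p)%N -> path E x p ->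
  exists p', [/\ path E x p', last x p' = last x p, (size p' < size p)%N &
                 aw x p <= aw x p'].
Proof.
move=> Hn Hp.
have Hnu : ~~ uniq (x :: take #|V| p).
  apply/negP => /card_uniqP Hc.
  have := max_card (mem (x :: take #|V| p)).
  by rewrite Hc /= size_take_min (minn_idPl Hn) ltnn.
have [p1 [p2 [p3 [Hd Hs0 Hsz Hl]]]] := walk_split Hnu.
have Hpe : p = p1 ++ p2 ++ (p3 ++ drop #|V| p).
  by rewrite !catA -(catA p1) -Hd cat_take_drop.
set a := last x p1 in Hl.
set p3' := p3 ++ drop #|V| p in Hpe.
move: Hp; rewrite Hpe !cat_path -/a Hl => /and3P [H1 H2 H3].
have Hsz' : (size p2 <= #|V|)%N.
  by apply: (leq_trans Hsz); rewrite size_take_min geq_minl.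
exists (p1 ++ p3'); split.
- by rewrite cat_path H1 -/a /p3' cat_path.
- by rewrite !last_cat -/a Hl.
- rewrite !size_cat; move: Hs0; clear; lia.
- rewrite !aw_cat -/a Hl.
  have := Hlam Hs0 Hsz' H2 Hl; rewrite /aw; lra.
Qed.

Lemma walk_exists v : exists p, [/\ path E c p, last c p = v & (size p <= #|V|)%N].
Proof.
have /connectP [p Hp ->] := hSC c v.
case/shortenP: Hp => p' Hp' Hu _.
exists p'; split => //.
have := max_card (mem (c :: p')); rewrite (card_uniqP Hu) /=.
exact: ltnW.
Qed.

Lemma best_walk v : exists P, [/\ path E c P, last c P = v, (size P <= #|V|)%N &
  forall Q, path E c Q -> last c Q = v -> (size Q <= #|V|)%N -> aw c Q <= aw c P].
Proof.
set W := [seq p <- seqs V #|V| | path E c p && (last c p == v)].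
have HW : W != [::].
  have [p [Hp Hl Hs]] := walk_exists v.
  apply/eqP => HW; have : p \in W by rewrite mem_filter Hp Hl eqxx mem_seqs Hs.
  by rewrite HW.
have [P HP Hmax] := argmax (aw c) HW.
move: HP; rewrite mem_filter mem_seqs => /andP [/andP [Hp /eqP Hl] Hs].
exists P; split => // Q HQ HQl HQs; apply: Hmax.
by rewrite mem_filter mem_seqs HQ HQl eqxx HQs.
Qed.

Lemma potential_exists : exists y : V -> R,
  (forall u v, E u v -> y u + alpha u v - lam <= y v) /\
  (forall v, exists u, E u v /\ y v = y u + alpha u v - lam).
Proof.
case: (choice best_walk) => P HP.
pose y v := aw c (P v).
have Y1 u v : E u v -> y u + alpha u v - lam <= y v.
  move=> Huv; have [Hp Hl Hs Hmax] := HP u.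
  have Hq : path E c (rcons (P u) v) by rewrite rcons_path Hp Hl.
  have Hql : last c (rcons (P u) v) = v by rewrite last_rcons.
  have Hqa : aw c (rcons (P u) v) = y u + alpha u v - lam by rewrite aw_rcons Hl.
  have [Hqs|Hqs] := leqP (size (rcons (P u) v)) #|V|.
    by rewrite -Hqa; have [_ _ _ Hm] := HP v; apply: Hm.
  have [q' [Hq' Hq'l Hq's Hq'a]] := shorten_walk (ltnW Hqs) Hq.
  rewrite -Hqa; apply: (le_trans Hq'a).
  have [_ _ _ Hm] := HP v; apply: Hm => //; first by rewrite Hq'l.
  by move: Hq's; rewrite size_rcons ltnS; move/leq_trans; apply; move: Hqs; rewrite size_rcons ltnS.
have Y2 v Q : path E c Q -> last c Q = v -> (size Q <= #|V|)%N -> Q != [::] ->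
    aw c Q = y v -> exists u, E u v /\ y v = y u + alpha u v - lam.
  case/lastP: Q => [|Q z] // Hp Hl Hs _ Ha.
  move: Hp Hl; rewrite rcons_path last_rcons => /andP [HQ Hz] Hzv.
  subst z; exists (last c Q); split => //.
  apply/eqP; rewrite eq_le Y1 // andbT -Ha aw_rcons lerD2r lerD2r.
  have [_ _ _ Hm] := HP (last c Q); apply: Hm => //.
  by move: Hs; rewrite size_rcons; apply: ltnW.
exists y; split => // v.
have [Hp Hl Hs _] := HP v.
case HPv: (P v) => [|a l].
  move: Hl; rewrite HPv /= => Hcv; subst v.
  apply: (Y2 c C) => //; first by case: (C) HCs0.
  by rewrite /y HPv /aw /= HCw; ring.
by apply: (Y2 v (P v)) => //; rewrite HPv.
Qed.

End Crit.
Set Implicit Arguments. Unset Strict Implicit.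

Section Fix.
Variables (R : realType) (V : finType) (E : rel V) (alpha : V -> V -> R).
Hypothesis hSC : strongly_connected E.

Lemma crit_exists (u0 v0 : V) : E u0 v0 -> exists lam c C,
  [/\ (forall x p, (0 < size p)%N -> (size p <= #|V|)%N ->
        path E x p -> last x p = x -> wt alpha x p <= lam * (size p)%:R),
      path E c C, last c C = c, (0 < size C)%N &
      (size C <= #|V|)%N /\ wt alpha c C = lam * (size C)%:R].
Proof.
move=> Huv.
pose cyc (xp : V * seq V) := [&& (0 < size xp.2)%N, path E xp.1 xp.2 & last xp.1 xp.2 == xp.1].
pose CL := [seq xp <- [seq (x, p) | x <- enum V, p <- seqs V #|V|] | cyc xp].
pose mean (xp : V * seq V) := wt alpha xp.1 xp.2 / (size xp.2)%:R.
have memCL x p : (0 < size p)%N -> (size p <= #|V|)%N ->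
    path E x p -> last x p = x -> (x, p) \in CL.
  move=> H0 Hs Hp Hl; rewrite mem_filter /cyc /= H0 Hp Hl eqxx /=.
  by apply: allpairs_f; rewrite ?mem_enum ?mem_seqs.
have HCL : CL != [::].
  have /connectP [p Hp Hl] := hSC v0 u0.
  move: Hl; case/shortenP: Hp => p' Hp' Hu _ Hl.
  apply/eqP => HCL.
  have : (u0, v0 :: p') \in CL.
    apply: memCL => //=.
    - by have := max_card (mem (v0 :: p')); rewrite (card_uniqP Hu).
    - by rewrite Huv.
  by rewrite HCL.
have [[c C] HC Hmax] := argmax mean HCL.
have HC' := HC.
move: HC; rewrite mem_filter /cyc /= => /andP [/and3P [H0 Hp /eqP Hl] _].
have HCs : (size C <= #|V|)%N.
  by move: HC'; rewrite mem_filter => /andP [_ /allpairsP [[x q] [_ Hq [_ ->]]]]; rewrite -mem_seqs.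
have Hsz0 : (size C)%:R != 0 :> R by rewrite pnatr_eq0 -lt0n.
exists (mean (c, C)), c, C; split => //; last first.
  by split => //; rewrite /mean /= divfK.
move=> x p Hx0 Hxs Hxp Hxl.
have := Hmax (x, p) (memCL x p Hx0 Hxs Hxp Hxl).
rewrite /mean /= ler_pdivrMr ?ltr0n //.
Qed.

Lemma filter_none (s : seq V) (P : pred V) : (forall x, ~~ P x) -> [seq x <- s | P x] = [::].
Proof. by move=> H; elim: s => [|a s IH] //=; rewrite (negbTE (H a)). Qed.

Lemma fixed_exists : exists q : V -> R, @fixedp R V E alpha q /\ forall x, 0 <= q x.
Proof.
case: (pselect (exists u v, E u v)) => [[u0 [v0 Huv]]|Hno]; last first.
  exists (fun _ => 0); split => // v.
  have Hn x y : ~~ E x y by apply/negP => Hxy; apply: Hno; exists x, y.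
  rewrite /rhoR /beta_out /beta_in !filter_none // /seqmax !big_nil subrr.
  by rewrite maxxx.
have [lam [c [C [Hlam HCp HCl HCs0 [HCsn HCw]]]]] := crit_exists Huv.
have [y [Y1 Y2]] := @potential_exists R V E alpha lam c C Hlam HCp HCl HCs0 HCsn HCw hSC.
pose K := \sum_w `|y w|.
exists (fun x => - y x + K); split.
  move=> v; rewrite /fixedp.
  rewrite (_ : @B R V alpha (fun x => - y x + K) = @B R V alpha (fun x => - y x)); last first.
    exact: (@B_shift R V alpha (fun x => - y x) K).
  have [u1 [Hu1 Hyv]] := Y2 v.
  have [w1 Hw1] : exists w, E v w.
    have /connectP [p Hp Hl] := hSC v u0.
    case: p Hp Hl => [|w p] /=; first by move=> _ <-; exists v0.
    by move=> /andP [Hvw _] _; exists w.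
  have Hin : lam <= beta_in E (@B R V alpha (fun x => - y x)) v.
    apply: (@le_trans _ _ (@B R V alpha (fun x => - y x) u1 v)).
      by rewrite /B Hyv; lra.
    by apply: seqmax_ub; apply: map_f; rewrite mem_filter Hu1 mem_enum.
  have Hout : beta_out E (@B R V alpha (fun x => - y x)) v <= lam.
    apply: seqmax_le.
      apply/eqP => H; have : @B R V alpha (fun x => - y x) v w1 \in [::].
        by rewrite -H; apply: map_f; rewrite mem_filter Hw1 mem_enum.
      by [].
    move=> _ /mapP [w Hw ->]; move: Hw; rewrite mem_filter => /andP [Hvw _].
    have := Y1 _ _ Hvw; rewrite /B; lra.
  rewrite /rhoR; apply/max_idPl; lra.
move=> x; rewrite /K (bigD1 x) //=.
have : 0 <= \sum_(i | i != x) `|y i| by apply: sumr_ge0.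
have : - y x <= `|y x| by rewrite ler_normr lexx orbT.
move=> _ H2; rewrite addrA; apply: addr_ge0 => //; rewrite addrC subr_ge0; exact: ler_norm.
Qed.

End Fix.

Theorem lemma3 (R : realType) (V : finType) (E : rel V)
  (hSC : strongly_connected E) (alpha : V -> V -> R) :
  exists rstar : V -> R,
    forall s : nat -> V, fair s ->
      forall v : V, (fun t => raising_vec E alpha s t v) @ \oo --> rstar v.
Proof.
have Hex := @fixed_exists R V E alpha hSC.
case: (pselect (exists s : nat -> V, fair s)) => [[s0 Hs0]|Hno]; last first.
  by exists (fun _ => 0) => s Hs; exfalso; apply: Hno; exists s.
have [L0 [HL0 [HfL0 [HL00 HminL0]]]] := @limit_exists R V E alpha s0 Hs0 Hex.
exists L0 => s Hs v.
have [L [HL [HfL [HL0' HminL]]]] := @limit_exists R V E alpha s Hs Hex.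
have -> : L0 v = L v by apply/le_anti; rewrite HminL0 // HminL.
exact: HL.
Qed.
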